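(* Let $\sigma\ge2$ and let $(v_\circ,\mathcal V,\mathcal E)$ be a rooted connected Toom graph with $\sigma$ charges that is not the trivial Toom graph; let $N:=|V|-1$ and $M:=|\mathcal E|$. Then there exist a unique bijection $\eta:V\to\{0,\dots,N\}$ and incomplete Toom graphs $(\mathcal V'(e),\mathcal E'(e))_{0\le e\le M}$ such that, writing $(\mathcal V(e),\mathcal E(e))$ for the typed directed graph obtained from $(\mathcal V'(e),\mathcal E'(e))$ by relabelling each vertex $u$ as $\eta^{-1}(u)$: (i) $\eta(v_\circ)=0$; (ii) $(\mathcal V'(0),\mathcal E'(0))$ is the trivial incomplete Toom graph and $(\mathcal V(M),\mathcal E(M))=(\mathcal V,\mathcal E)$; (iii) for every $0<e\le M$, $(\mathcal V'(e),\mathcal E'(e))$ is an extension of $(\mathcal V'(e-1),\mathcal E'(e-1))$ at its most urgent loose end.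
   Context: A typed directed graph with vertex set $V$, vertex types $A$, edge types $B$ is a pair $(\mathcal V,\mathcal E)$, $\mathcal V\subset V\times A$, $\mathcal E\subset V\times V\times B$ (an element $(v,w,b)$ is a directed edge from $v$ to $w$ of type $b$), with every vertex having at least one type; $V_a$, $\vec E_b$, $\vec E_{b,\rm in}(v)$, $\vec E_{b,\rm out}(v)$ as usual; connected means the underlying undirected graph is connected. A Toom graph with $\sigma$ charges: vertex types $\{\circ,\ast,1,\dots,\sigma\}$, edge types $\{1,\dots,\sigma\}$, with (i) $v\in V_\circ$: no incoming edges and $|\vec E_{1,\rm out}(v)|=\dots=|\vec E_{\sigma,\rm out}(v)|\le1$; (ii) $v\in V_\ast$: no outgoing edges and $|\vec E_{1,\rm in}(v)|=\dots=|\vec E_{\sigma,\rm in}(v)|\le1$; (iii) $v\in V_s$: exactly one incoming and one outgoing edge of charge $s$ and none of other charges. A rooted Toom graph is a triple $(v_\circ,\mathcal V,\mathcal E)$ with $v_\circ\in V_\circ$. The trivial Toom graph: $V_\circ=V_\ast=\{0\}$, no other vertices, no edges. An incomplete Toom graph with $\sigma\ge2$ charges: connected typed directed graph with these type sets, vertex set $\{0,\dots,N\}$, $0\in V_\circ$, such that (i) $v\in V_\circ$: no incoming edges, at most one outgoing edge of each charge; (ii) $v\in V_\ast$: no outgoing edges, at most one incoming of each charge; (iii) $v\in V_s$: at most one incoming and at most one outgoing edge of charge $s$, none of other charges; and either it is the trivial Toom graph or (iv) every $v\in(V_\sigma\cup V_\circ)\setminus\{0\}$ has exactly one outgoing edge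 of charge $\sigma$; (v) every $v\in V_s$ with $1\le s<\sigma$ has exactly one incoming edge of charge $s$; (vi) every $v\in V_\ast$ has an incoming edge of some charge $1\le s<\sigma$. The trivial incomplete Toom graph has $V=V_\circ=\{0\}$, $V_\ast=\emptyset$, $V_s=\emptyset$, no edges. A loose end is a pair $(v,s)$ with either $v\in V_\circ\cup V_s$, $1\le s<\sigma$, and no outgoing edge of charge $s$ at $v$; or $v\in V_\ast\cup V_\sigma$, $s=\sigma$, and no incoming edge of charge $\sigma$ at $v$. The most urgent loose end is the one with the smallest charge $s$ and, among those, the smallest vertex $v$. An extension of an incomplete Toom graph $(\mathcal V,\mathcal E)$ at a loose end $(v,s)$ is an incomplete Toom graph $(\mathcal V',\mathcal E')$ with $\mathcal V\subset\mathcal V'$, $\mathcal E\subset\mathcal E'$ and $\mathcal E'\setminus\mathcal E$ a single element, of the form $(v,w,s)$ if $s<\sigma$ and $(w,v,\sigma)$ if $s=\sigma$. *)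

(* Defs.v *)
From mathcomp Require Import all_boot.
Set Implicit Arguments. Unset Strict Implicit. Unset Printing Implicit Defensive.

(* Vertex types: circ (source), star (sink), and charges s (meaningful for 1 <= s <= sigma). *)
Inductive vtype := VCirc | VStar | VChg of nat.

(* A typed directed graph whose vertices live in a universe U:
   vt v a  <=> (v,a) is in the vertex-type set;
   ed v w s <=> (v,w,s) is a directed edge from v to w of type (charge) s.
   The vertex set is the set of elements having at least one type. *)
Record tgraph (U : Type) := TGraph { vt : U -> vtype -> bool ; ed : U -> U -> nat -> bool }.

Section Defs.
Variable sigma : nat.

Definition isv (U : Type) (G : tgraph U) (v : U) : Prop := exists a, vt G v a.

Definition wf_tg (U : Type) (G : tgraph U) : Prop :=
  (forall v s, vt G v (VChg s) -> 0 < s <= sigma) /\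
  (forall v w s, ed G v w s -> [/\ isv G v, isv G w & 0 < s <= sigma]).

Definition outE (U : finType) (G : tgraph U) (s : nat) (v : U) := [set w | ed G v w s].
Definition inE_ (U : finType) (G : tgraph U) (s : nat) (v : U) := [set w | ed G w v s].

Definition tconnected (U : finType) (G : tgraph U) : Prop :=
  forall u w, isv G u -> isv G w ->
    connect [rel x y | [exists s : 'I_sigma.+1, ed G x y s || ed G y x s]] u w.

Definition toom (U : finType) (G : tgraph U) : Prop :=
  wf_tg G /\
  (forall v, vt G v VCirc ->
     (forall w s, ~~ ed G w v s) /\
     exists2 k, k <= 1 & forall s, 0 < s <= sigma -> #|outE G s v| = k) /\
  (forall v, vt G v VStar ->
     (forall w s, ~~ ed G v w s) /\
     exists2 k, k <= 1 & forall s, 0 < s <= sigma -> #|inE_ G s v| = k) /\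
  (forall v s, vt G v (VChg s) ->
     [/\ #|inE_ G s v| = 1, #|outE G s v| = 1 &
         forall t, t != s -> #|inE_ G t v| = 0 /\ #|outE G t v| = 0]).

Definition trivial_at (U : Type) (G : tgraph U) (v0 : U) : Prop :=
  (forall v, isv G v -> v = v0) /\ vt G v0 VCirc /\ vt G v0 VStar /\
  (forall a, vt G v0 a -> a = VCirc \/ a = VStar) /\
  (forall v w s, ~~ ed G v w s).

Definition incomplete (n : nat) (G : tgraph 'I_n.+1) : Prop :=
  wf_tg G /\
  (exists N', forall i : 'I_n.+1, isv G i <-> (i <= N')%N) /\
  tconnected G /\
  vt G ord0 VCirc /\
  (forall v, vt G v VCirc ->
     (forall w s, ~~ ed G w v s) /\ forall s, #|outE G s v| <= 1) /\
  (forall v, vt G v VStar ->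
     (forall w s, ~~ ed G v w s) /\ forall s, #|inE_ G s v| <= 1) /\
  (forall v s, vt G v (VChg s) ->
     [/\ #|inE_ G s v| <= 1, #|outE G s v| <= 1 &
         forall t, t != s -> #|inE_ G t v| = 0 /\ #|outE G t v| = 0]) /\
  (trivial_at G ord0 \/
   [/\ (forall v, vt G v (VChg sigma) || vt G v VCirc -> v != ord0 ->
          #|outE G sigma v| = 1),
       (forall v s, 0 < s < sigma -> vt G v (VChg s) -> #|inE_ G s v| = 1) &
       (forall v, vt G v VStar -> exists s, 0 < s < sigma /\ exists w, ed G w v s)]).

Definition loose_end (n : nat) (G : tgraph 'I_n.+1) (v : 'I_n.+1) (s : nat) : Prop :=
  ((vt G v VCirc \/ vt G v (VChg s)) /\ 0 < s < sigma /\ (forall w, ~~ ed G v w s)) \/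
  ((vt G v VStar \/ vt G v (VChg sigma)) /\ s = sigma /\ (forall w, ~~ ed G w v sigma)).

Definition most_urgent (n : nat) (G : tgraph 'I_n.+1) (v : 'I_n.+1) (s : nat) : Prop :=
  loose_end G v s /\
  forall v' s', loose_end G v' s' -> (s < s')%N \/ (s = s' /\ (v <= v')%N).

Definition extension (n : nat) (G G' : tgraph 'I_n.+1) (v : 'I_n.+1) (s : nat) : Prop :=
  incomplete G' /\
  (forall u a, vt G u a -> vt G' u a) /\
  exists w : 'I_n.+1,
    let e := if (s < sigma)%N then (v, w, s) else (w, v, sigma) in
    ~~ ed G e.1.1 e.1.2 e.2 /\
    forall x y t, ed G' x y t = ed G x y t || ((x, y, t) == e).

Definition ext_most_urgent (n : nat) (G G' : tgraph 'I_n.+1) : Prop :=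
  exists v s, most_urgent G v s /\ extension G G' v s.

Definition trivial_incomplete (n : nat) (G : tgraph 'I_n.+1) : Prop :=
  (forall v a, vt G v a <-> v = ord0 /\ a = VCirc) /\
  (forall v w s, ~~ ed G v w s).

Definition edge_count (U : finType) (G : tgraph U) : nat :=
  #|[set x : U * U * 'I_sigma.+1 | ed G x.1.1 x.1.2 x.2]|.

End Defs.

(* relabel a graph on 'I_m by eta^{-1}: vertex u becomes eta^{-1} u, so
   (v,a) is in the relabelled vertex-type set iff (eta v, a) is in the original *)
Definition relabel (T : Type) (m : nat) (eta : T -> 'I_m) (G : tgraph 'I_m) : tgraph T :=
  TGraph (fun v a => vt G (eta v) a) (fun v w s => ed G (eta v) (eta w) s).

Definition tg_eq (T : Type) (G H : tgraph T) : Prop :=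
  (forall v a, vt G v a = vt H v a) /\ (forall v w s, ed G v w s = ed H v w s).

(* Main.v *)
Require Import Defs.
From mathcomp Require Import all_boot zify.
From Stdlib Require Import Classical FunctionalExtensionality.
Set Implicit Arguments. Unset Strict Implicit. Unset Printing Implicit Defensive.

Lemma card0_of (U : finType) (A : {set U}) : (forall x, x \notin A) -> #|A| = 0.
Proof.
move=> H; apply/eqP; rewrite cards_eq0; apply/eqP/setP => x.
by rewrite inE (negbTE (H x)).
Qed.

Lemma card_le1_eq (U : finType) (A : {set U}) x y :
  #|A| <= 1 -> x \in A -> y \in A -> x = y.
Proof. by move/card_le1_eqP => H xA yA; apply: H. Qed.

Lemma card_gt0_ex (U : finType) (A : {set U}) : 0 < #|A| -> exists x, x \in A.
Proof. by move/card_gt0P. Qed.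

Section Toom.
Variable sigma : nat.
Variable T : finType.
Variable G : tgraph T.
Variable vo : T.
Hypothesis Hsig : 2 <= sigma.
Hypothesis Hall : forall v, isv G v.
Hypothesis Htoom : toom sigma G.
Hypothesis Hvo : vt G vo VCirc.
Hypothesis Hcon : tconnected sigma G.
Hypothesis Hnt : ~ exists v0, trivial_at G v0.

Lemma G_wfe x y t : ed G x y t -> 0 < t <= sigma.
Proof. by case: Htoom => [[_ H] _] /H []. Qed.

Lemma G_wft x s : vt G x (VChg s) -> 0 < s <= sigma.
Proof. by case: Htoom => [[H _] _] /H. Qed.

Lemma G_circ x : vt G x VCirc ->
  (forall w s, ~~ ed G w x s) /\ exists2 k, k <= 1 & forall s, 0 < s <= sigma -> #|outE G s x| = k.
Proof. by case: Htoom => _ [H _] /H. Qed.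

Lemma G_star x : vt G x VStar ->
  (forall w s, ~~ ed G x w s) /\ exists2 k, k <= 1 & forall s, 0 < s <= sigma -> #|inE_ G s x| = k.
Proof. by case: Htoom => _ [_ [H _]] /H. Qed.

Lemma G_chg x s : vt G x (VChg s) ->
  [/\ #|inE_ G s x| = 1, #|outE G s x| = 1 &
         forall t, t != s -> #|inE_ G t x| = 0 /\ #|outE G t x| = 0].
Proof. by case: Htoom => _ [_ [_ H]] /H. Qed.

Lemma inOut x y t : (y \in outE G t x) = ed G x y t.
Proof. by rewrite inE. Qed.
Lemma inIn x y t : (y \in inE_ G t x) = ed G y x t.
Proof. by rewrite inE. Qed.

Lemma G_out_le1 x t : #|outE G t x| <= 1.
Proof.
case: (Hall x) => [[]].
- move=> /G_circ [_ [k k1 Hk]].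
  case: (boolP (0 < t <= sigma)) => ht; first by rewrite Hk.
  rewrite card0_of // => y; rewrite inOut; apply/negP => /G_wfe; by rewrite (negbTE ht).
- move=> /G_star [H _]; by rewrite card0_of // => y; rewrite inOut.
- move=> s /G_chg [_ H1 H2]; case: (eqVneq t s) => [->|ne]; first by rewrite H1.
  by rewrite (proj2 (H2 _ ne)).
Qed.

Lemma G_in_le1 x t : #|inE_ G t x| <= 1.
Proof.
case: (Hall x) => [[]].
- move=> /G_circ [H _]; by rewrite card0_of // => y; rewrite inIn.
- move=> /G_star [_ [k k1 Hk]].
  case: (boolP (0 < t <= sigma)) => ht; first by rewrite Hk.
  rewrite card0_of // => y; rewrite inIn; apply/negP => /G_wfe; by rewrite (negbTE ht).
- move=> s /G_chg [H1 _ H2]; case: (eqVneq t s) => [->|ne]; first by rewrite H1.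
  by rewrite (proj1 (H2 _ ne)).
Qed.

Lemma G_out_uniq x y z t : ed G x y t -> ed G x z t -> y = z.
Proof. rewrite -!inOut; exact: card_le1_eq (G_out_le1 x t). Qed.

Lemma G_in_uniq x y z t : ed G y x t -> ed G z x t -> y = z.
Proof. rewrite -!inIn; exact: card_le1_eq (G_in_le1 x t). Qed.

Lemma G_src x y t : ed G x y t -> vt G x VCirc \/ vt G x (VChg t).
Proof.
move=> e; case: (Hall x) => [[]]; first by left.
- by move=> /G_star [H _]; move: (H y t); rewrite e.
- move=> s hs; case: (eqVneq t s) => [->|ne]; first by right.
  case: (G_chg hs) => _ _ /(_ _ ne) [_ H]; exfalso.
  have : 0 < #|outE G t x| by apply/card_gt0P; exists y; rewrite inOut.
  by rewrite H.
Qed.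

Lemma G_tgt x y t : ed G x y t -> vt G y VStar \/ vt G y (VChg t).
Proof.
move=> e; case: (Hall y) => [[]].
- by move=> /G_circ [H _]; move: (H x t); rewrite e.
- by left.
- move=> s hs; case: (eqVneq t s) => [->|ne]; first by right.
  case: (G_chg hs) => _ _ /(_ _ ne) [H _]; exfalso.
  have : 0 < #|inE_ G t y| by apply/card_gt0P; exists x; rewrite inIn.
  by rewrite H.
Qed.


Definition RG := [rel x y | [exists s : 'I_sigma.+1, ed G x y s || ed G y x s]].

Lemma connect_isolated (U : finType) (r : rel U) x y :
  (forall z, ~~ r x z) -> connect r x y -> y = x.
Proof.
move=> H /connectP [[|z p] /=]; first by move=> _ ->.
by rewrite (negbTE (H z)).
Qed.

Lemma ex_in_of_chg x s : vt G x (VChg s) -> exists y, ed G y x s.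
Proof.
move=> /G_chg [H _ _]; have : 0 < #|inE_ G s x| by rewrite H.
by move/card_gt0P => [y]; rewrite inIn; exists y.
Qed.

Lemma ex_out_of_chg x s : vt G x (VChg s) -> exists y, ed G x y s.
Proof.
move=> /G_chg [_ H _]; have : 0 < #|outE G s x| by rewrite H.
by move/card_gt0P => [y]; rewrite inOut; exists y.
Qed.

Lemma vo_type a : vt G vo a -> a = VCirc.
Proof.
case: a => //.
- move=> hs; exfalso; apply: Hnt; exists vo.
  have iso : forall z, ~~ RG vo z.
    move=> z; apply/negP => /existsP [s /orP [e|e]].
    + by move: (proj1 (G_star hs) z s); rewrite e.
    + by move: (proj1 (G_circ Hvo) z s); rewrite e.
  have allvo : forall v, v = vo.
    move=> v; apply: (connect_isolated iso); exact: Hcon.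
  split; first by move=> v _; apply: allvo.
  split => //; split => //; split.
  + case=> //; [by left|by right|].
    move=> s /ex_in_of_chg [y e].
    by move: (proj1 (G_circ Hvo) y s); rewrite e.
  + move=> v w s; rewrite (allvo v); exact: (proj1 (G_star hs)).
- move=> s /ex_in_of_chg [y e].
  by move: (proj1 (G_circ Hvo) y s); rewrite e.
Qed.

Section Nontriv.
Hypothesis Hex : exists x y t, ed G x y t.

Lemma G_incident x : exists y t, ed G x y t \/ ed G y x t.
Proof.
case: Hex => a [b [t e]].
have := Hcon (Hall x) (Hall a).
move=> /connectP [[|z p] /=].
- move=> _ ax; subst a; by exists b, t; left.
- move=> /andP [/existsP [s /orP [e'|e']] _] _; exists z, s; [by left|by right].
Qed.

Lemma G_types_uniq x a b : vt G x a -> vt G x b -> a = b.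
Proof.
have circ_star : vt G x VCirc -> vt G x VStar -> False.
  move=> hc hs; case: (G_incident x) => y [t [e|e]].
  - by move: (proj1 (G_star hs) y t); rewrite e.
  - by move: (proj1 (G_circ hc) y t); rewrite e.
have circ_chg : forall s, vt G x VCirc -> vt G x (VChg s) -> False.
  move=> s hc /ex_in_of_chg [y e].
  by move: (proj1 (G_circ hc) y s); rewrite e.
have star_chg : forall s, vt G x VStar -> vt G x (VChg s) -> False.
  move=> s hc /ex_out_of_chg [y e].
  by move: (proj1 (G_star hc) y s); rewrite e.
case: a => [||s]; case: b => [||s'] //.
- by move=> *; exfalso; eauto.
- by move=> *; exfalso; eauto.
- by move=> *; exfalso; eauto.
- by move=> *; exfalso; eauto.
- by move=> h1 h2; exfalso; eauto.
- by move=> h1 h2; exfalso; eauto.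
move=> h1 h2; case: (eqVneq s s') => [->//|ne].
have ne' : s' != s by rewrite eq_sym.
case: (G_chg h1) => _ _ /(_ _ ne') [H _].
by case: (G_chg h2) => H' _ _; rewrite H in H'.
Qed.

Lemma G_out_ex x t : vt G x VCirc -> 0 < t <= sigma -> exists y, ed G x y t.
Proof.
move=> hc ht; case: (G_circ hc) => hin [k k1 Hk].
have : k != 0.
  apply/eqP => k0; subst k.
  case: (G_incident x) => y [t' [e|e]].
  - have := Hk _ (G_wfe e); move: e; rewrite -inOut => e.
    by move/eqP; rewrite cards_eq0 => /eqP E; rewrite E inE in e.
  - by move: (hin y t'); rewrite e.
move=> k0; have : 0 < #|outE G t x| by rewrite Hk //; lia.
by move/card_gt0P => [y]; rewrite inOut; exists y.
Qed.

Lemma G_in_ex x t : vt G x VStar -> 0 < t <= sigma -> exists y, ed G y x t.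
Proof.
move=> hc ht; case: (G_star hc) => hin [k k1 Hk].
have : k != 0.
  apply/eqP => k0; subst k.
  case: (G_incident x) => y [t' [e|e]].
  - by move: (hin y t'); rewrite e.
  - have := Hk _ (G_wfe e); move: e; rewrite -inIn => e.
    by move/eqP; rewrite cards_eq0 => /eqP E; rewrite E inE in e.
move=> k0; have : 0 < #|inE_ G t x| by rewrite Hk //; lia.
by move/card_gt0P => [y]; rewrite inIn; exists y.
Qed.

End Nontriv.

Local Notation n := (#|T|.-1).

Definition embed (H : tgraph 'I_n.+1) (g : 'I_n.+1 -> T) : Prop :=
 [/\ (forall i, isv H i -> forall a, vt H i a = vt G (g i) a),
     (forall i j t, ed H i j t -> [/\ isv H i, isv H j & ed G (g i) (g j) t]),
     (forall i j, isv H i -> isv H j -> g i = g j -> i = j) &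
     g ord0 = vo].

Section Embed.
Variable H : tgraph 'I_n.+1.
Variable g : 'I_n.+1 -> T.
Hypothesis Hemb : embed H g.

Lemma E_vt i a : vt H i a -> vt G (g i) a.
Proof. case: Hemb => E1 _ _ _ h; by rewrite -E1 //; exists a. Qed.
Lemma E_vt' i a : isv H i -> vt G (g i) a -> vt H i a.
Proof. by case: Hemb => E1 _ _ _ hi; rewrite E1. Qed.
Lemma E_vteq i a : isv H i -> vt H i a = vt G (g i) a.
Proof. by case: Hemb => E1 _ _ _ hi; rewrite E1. Qed.
Lemma E_ed i j t : ed H i j t -> ed G (g i) (g j) t.
Proof. by case: Hemb => _ E2 _ _ /E2 []. Qed.
Lemma E_edv i j t : ed H i j t -> isv H i /\ isv H j.
Proof. by case: Hemb => _ E2 _ _ /E2 []. Qed.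
Lemma E_inj i j : isv H i -> isv H j -> g i = g j -> i = j.
Proof. by case: Hemb => _ _ E3 _; apply: E3. Qed.

Lemma E_out_le1 t i : #|outE H t i| <= 1.
Proof.
apply/card_le1_eqP => j k; rewrite !inE => e1 e2.
have [_ hj] := E_edv e1; have [_ hk] := E_edv e2.
apply: E_inj => //; symmetry; exact: G_out_uniq (E_ed e1) (E_ed e2).
Qed.

Lemma E_in_le1 t i : #|inE_ H t i| <= 1.
Proof.
apply/card_le1_eqP => j k; rewrite !inE => e1 e2.
have [hj _] := E_edv e1; have [hk _] := E_edv e2.
apply: E_inj => //; symmetry; exact: G_in_uniq (E_ed e1) (E_ed e2).
Qed.

Lemma E_local :
  (forall v, vt H v VCirc ->
     (forall w s, ~~ ed H w v s) /\ forall s, #|outE H s v| <= 1) /\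
  (forall v, vt H v VStar ->
     (forall w s, ~~ ed H v w s) /\ forall s, #|inE_ H s v| <= 1) /\
  (forall v s, vt H v (VChg s) ->
     [/\ #|inE_ H s v| <= 1, #|outE H s v| <= 1 &
         forall t, t != s -> #|inE_ H t v| = 0 /\ #|outE H t v| = 0]).
Proof.
split; [|split].
- move=> v /E_vt hc; split; last by move=> s; apply: E_out_le1.
  move=> w s; apply/negP => /E_ed e.
  by move: (proj1 (G_circ hc) (g w) s); rewrite e.
- move=> v /E_vt hc; split; last by move=> s; apply: E_in_le1.
  move=> w s; apply/negP => /E_ed e.
  by move: (proj1 (G_star hc) (g w) s); rewrite e.
- move=> v s /E_vt hc; split; [exact: E_in_le1|exact: E_out_le1|].
  move=> t ne; case: (G_chg hc) => _ _ /(_ _ ne) [h1 h2]; split.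
  + apply: card0_of => w; rewrite inE; apply/negP => /E_ed e.
    have : 0 < #|inE_ G t (g v)| by apply/card_gt0P; exists (g w); rewrite inIn.
    by rewrite h1.
  + apply: card0_of => w; rewrite inE; apply/negP => /E_ed e.
    have : 0 < #|outE G t (g v)| by apply/card_gt0P; exists (g w); rewrite inOut.
    by rewrite h2.
Qed.

Lemma emb_wf : wf_tg sigma H.
Proof.
split.
- move=> i s h; apply: (G_wft (x:=g i)); exact: E_vt h.
- move=> i j t e; have [hi hj] := E_edv e; split => //; exact: G_wfe (E_ed e).
Qed.

Definition phi (x : 'I_n.+1 * 'I_n.+1 * 'I_sigma.+1) : T * T * 'I_sigma.+1 :=
  (g x.1.1, g x.1.2, x.2).

Definition SH := [set x : 'I_n.+1 * 'I_n.+1 * 'I_sigma.+1 | ed H x.1.1 x.1.2 x.2].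
Definition SG := [set x : T * T * 'I_sigma.+1 | ed G x.1.1 x.1.2 x.2].

Lemma phi_inj : {in SH &, injective phi}.
Proof.
move=> [[i j] t] [[i' j'] t']; rewrite !inE /= => e1 e2 [E1 E2 ->].
have [hi hj] := E_edv e1; have [hi' hj'] := E_edv e2.
by rewrite (E_inj hi hi' E1) (E_inj hj hj' E2).
Qed.

Lemma phi_sub : phi @: SH \subset SG.
Proof.
apply/subsetP => x /imsetP [[[i j] t]]; rewrite inE /= => e ->.
by rewrite inE /=; apply: E_ed.
Qed.

Lemma count_le : edge_count sigma H <= edge_count sigma G.
Proof.
rewrite /edge_count -/SH -/SG -(card_in_imset phi_inj).
exact: subset_leq_card phi_sub.
Qed.

Lemma count_ge :
  (forall y z t, ed G y z t -> exists i j, ed H i j t /\ g i = y /\ g j = z) ->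
  edge_count sigma G <= edge_count sigma H.
Proof.
move=> Hs; rewrite /edge_count -/SH -/SG.
apply: leq_trans (leq_imset_card phi SH).
apply: subset_leq_card; apply/subsetP => [[[y z] t]]; rewrite inE /= => e.
case: (Hs _ _ _ e) => i [j [e' [<- <-]]].
by apply/imsetP; exists (i, j, t) => //; rewrite inE.
Qed.

Lemma count_eq_surj : edge_count sigma H = edge_count sigma G ->
  forall y z t, ed G y z t -> exists i j, ed H i j t /\ g i = y /\ g j = z.
Proof.
rewrite /edge_count -/SH -/SG => Heq.
have : phi @: SH == SG.
  rewrite eqEcard phi_sub /= (card_in_imset phi_inj); by rewrite Heq.
move=> /eqP ESG y z t e.
have ht := G_wfe e.
have : (y, z, inord t : 'I_sigma.+1) \in SG by rewrite inE /= inordK //; lia.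
rewrite -ESG => /imsetP [[[i j] t']]; rewrite inE /= => e' [E1 E2 E3].
exists i, j; split => //.
by have -> : t = t' by rewrite -E3 inordK //; lia.
Qed.

Lemma closure_all :
  (forall y z t, ed G y z t ->
     (exists i, isv H i /\ g i = y) \/ (exists j, isv H j /\ g j = z) ->
     exists i j, ed H i j t /\ g i = y /\ g j = z) ->
  isv H ord0 ->
  forall x, exists i, isv H i /\ g i = x.
Proof.
move=> Hs h0 x.
have := Hcon (Hall vo) (Hall x); move=> /connectP [p].
case: Hemb => _ _ _ E4.
have : exists i, isv H i /\ g i = vo by exists ord0.
move: vo => y0 + Hp ->; elim: p y0 Hp => [//|z p IH] y0 /= /andP [r hp] hy.
apply: IH hp _.
case/existsP: r => s /orP [e|e].
- case: (Hs _ _ _ e (or_introl hy)) => i [j [e' [_ <-]]].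
  exists j; split => //; exact: (proj2 (E_edv e')).
- case: (Hs _ _ _ e (or_intror hy)) => i [j [e' [<- _]]].
  exists i; split => //; exact: (proj1 (E_edv e')).
Qed.

Lemma closure_edges :
  (forall y z t, ed G y z t ->
     (exists i, isv H i /\ g i = y) \/ (exists j, isv H j /\ g j = z) ->
     exists i j, ed H i j t /\ g i = y /\ g j = z) ->
  isv H ord0 ->
  forall y z t, ed G y z t -> exists i j, ed H i j t /\ g i = y /\ g j = z.
Proof.
move=> Hs h0 y z t e; apply: (Hs) => //; left; exact: (closure_all Hs h0 y).
Qed.

End Embed.

Lemma card_set_sum (U : finType) (P : pred U) : #|[set j | P j]| = \sum_j (P j : nat).
Proof.
rewrite cardsE -sum1_card big_mkcond /=; apply: eq_bigr => j _.
by rewrite unfold_in; case: (P j).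
Qed.

Lemma sum_lt (U : finType) (f h : U -> nat) j0 :
  (forall i, f i <= h i) -> f j0 < h j0 -> \sum_i f i < \sum_i h i.
Proof.
move=> Hle Hlt; rewrite (bigD1 j0) //= [X in _ < X](bigD1 j0) //=.
rewrite -addSn; apply: leq_add => //; apply: leq_sum => i _; exact: Hle.
Qed.

Lemma double_count (U : finType) (H : tgraph U) t :
  \sum_i #|outE H t i| = \sum_i #|inE_ H t i|.
Proof.
rewrite /outE /inE_.
under eq_bigr => i _ do rewrite card_set_sum.
under [X in _ = X]eq_bigr => i _ do rewrite card_set_sum.
exact: exchange_big.
Qed.

Section Counting.
Variable H : tgraph 'I_n.+1.
Variable g : 'I_n.+1 -> T.
Hypothesis Hemb : embed H g.
Hypothesis Hinc : incomplete sigma H.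
Hypothesis Hex : exists x y t, ed G x y t.

Lemma LH_0 : vt H ord0 VCirc.
Proof. by case: Hinc => _ [_ [_ [h _]]]. Qed.

Lemma LH_nt :
  [/\ (forall v, vt H v (VChg sigma) || vt H v VCirc -> v != ord0 ->
          #|outE H sigma v| = 1),
       (forall v s, 0 < s < sigma -> vt H v (VChg s) -> #|inE_ H s v| = 1) &
       (forall v, vt H v VStar -> exists s, 0 < s < sigma /\ exists w, ed H w v s)].
Proof.
case: Hinc => _ [_ [_ [_ [_ [_ [_ [triv|//]]]]]]].
case: triv => _ [_ [hs _]].
have := E_vt Hemb hs; case: Hemb => _ _ _ ->.
by move/vo_type.
Qed.

Lemma H_tu i a b : vt H i a -> vt H i b -> a = b.
Proof. move=> /(E_vt Hemb) ha /(E_vt Hemb) hb; exact (G_types_uniq Hex ha hb). Qed.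

Lemma H_src i w t : ed H i w t -> vt H i VCirc \/ vt H i (VChg t).
Proof.
move=> e; have [hi _] := E_edv Hemb e.
by case: (G_src (E_ed Hemb e)) => h; [left|right]; apply: (E_vt' Hemb).
Qed.

Lemma H_tgt i w t : ed H w i t -> vt H i VStar \/ vt H i (VChg t).
Proof.
move=> e; have [_ hi] := E_edv Hemb e.
by case: (G_tgt (E_ed Hemb e)) => h; [left|right]; apply: (E_vt' Hemb).
Qed.

Lemma pc_out t i : #|outE H t i| <= vt H i VCirc + vt H i (VChg t).
Proof.
have := E_out_le1 Hemb t i.
case: (posnP #|outE H t i|) => [->//|/card_gt0P [w]]; rewrite inE => e.
by case: (H_src e) => ->; lia.
Qed.

Lemma pc_in t i : #|inE_ H t i| <= vt H i VStar + vt H i (VChg t).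
Proof.
have := E_in_le1 Hemb t i.
case: (posnP #|inE_ H t i|) => [->//|/card_gt0P [w]]; rewrite inE => e.
by case: (H_tgt e) => ->; lia.
Qed.

Section NoLoose.
Hypothesis Hnl : forall v s, ~ loose_end sigma H v s.

Lemma NL1 i t : 0 < t < sigma -> vt H i VCirc \/ vt H i (VChg t) -> exists w, ed H i w t.
Proof.
move=> ht hv; case: (boolP [exists w, ed H i w t]) => [/existsP //|/existsPn none].
exfalso; exact (Hnl (or_introl (conj hv (conj ht none)))).
Qed.

Lemma NL2 j : vt H j VStar \/ vt H j (VChg sigma) -> exists w, ed H w j sigma.
Proof.
move=> hv; case: (boolP [exists w, ed H w j sigma]) => [/existsP //|/existsPn none].
exfalso; exact (Hnl (or_intror (conj hv (conj erefl none)))).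
Qed.

Lemma pc_out_eq t i : 0 < t < sigma -> #|outE H t i| = vt H i VCirc + vt H i (VChg t).
Proof.
move=> ht; apply/eqP; rewrite eqn_leq pc_out /=.
case hc: (vt H i VCirc); case hs: (vt H i (VChg t)) => //=.
- by have := H_tu hc hs.
- have [w e] := NL1 ht (or_introl hc); apply/card_gt0P; exists w; by rewrite inE.
- have [w e] := NL1 ht (or_intror hs); apply/card_gt0P; exists w; by rewrite inE.
Qed.

Lemma pc_in_eq j : #|inE_ H sigma j| = vt H j VStar + vt H j (VChg sigma).
Proof.
apply/eqP; rewrite eqn_leq pc_in /=.
case hc: (vt H j VStar); case hs: (vt H j (VChg sigma)) => //=.
- by have := H_tu hc hs.
- have [w e] := NL2 (or_introl hc); apply/card_gt0P; exists w; by rewrite inE.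
- have [w e] := NL2 (or_intror hs); apply/card_gt0P; exists w; by rewrite inE.
Qed.

Lemma sum_sigma :
  \sum_(i : 'I_n.+1) (vt H i VStar : nat) <= \sum_(i : 'I_n.+1) (vt H i VCirc : nat).
Proof.
have E := double_count H sigma.
have E' : \sum_(i : 'I_n.+1) #|inE_ H sigma i| =
          \sum_(i : 'I_n.+1) (vt H i VStar + vt H i (VChg sigma)).
  by apply: eq_bigr => i _; exact: pc_in_eq.
have : \sum_(i : 'I_n.+1) #|outE H sigma i| <=
        \sum_(i : 'I_n.+1) (vt H i VCirc + vt H i (VChg sigma)).
  by apply: leq_sum => i _; apply: pc_out.
rewrite E E' !big_split /=; lia.
Qed.

Lemma C1 j t : 0 < t < sigma -> vt H j VStar -> exists w, ed H w j t.
Proof.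
move=> ht hj; case: (boolP [exists w, ed H w j t]) => [/existsP //|/existsPn none].
exfalso.
have E := double_count H t.
have E' : \sum_(i : 'I_n.+1) #|outE H t i| =
          \sum_(i : 'I_n.+1) (vt H i VCirc + vt H i (VChg t)).
  by apply: eq_bigr => i _; exact: pc_out_eq.
have : \sum_(i : 'I_n.+1) #|inE_ H t i| <
        \sum_(i : 'I_n.+1) (vt H i VStar + vt H i (VChg t)).
  apply: (sum_lt (j0:=j)); first by move=> i; apply: pc_in.
  rewrite hj card0_of //= => w; rewrite inE; exact: none.
rewrite -E E' !big_split /=.
by rewrite ltn_add2r => /(leq_ltn_trans sum_sigma); rewrite ltnn.
Qed.

Lemma C2 : exists w, ed H ord0 w sigma.
Proof.
case: (boolP [exists w, ed H ord0 w sigma]) => [/existsP //|/existsPn none].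
exfalso.
have ht1 : 0 < 1 < sigma by lia.
have E1 := double_count H 1.
have E1' : \sum_(i : 'I_n.+1) #|outE H 1 i| =
          \sum_(i : 'I_n.+1) (vt H i VCirc + vt H i (VChg 1)).
  by apply: eq_bigr => i _; exact: pc_out_eq.
have : \sum_(i : 'I_n.+1) #|inE_ H 1 i| <=
        \sum_(i : 'I_n.+1) (vt H i VStar + vt H i (VChg 1)).
  by apply: leq_sum => i _; apply: pc_in.
rewrite -E1 E1' !big_split /= => L1.
have Es := double_count H sigma.
have Es' : \sum_(i : 'I_n.+1) #|inE_ H sigma i| =
          \sum_(i : 'I_n.+1) (vt H i VStar + vt H i (VChg sigma)).
  by apply: eq_bigr => i _; exact: pc_in_eq.
have : \sum_(i : 'I_n.+1) #|outE H sigma i| <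
        \sum_(i : 'I_n.+1) (vt H i VCirc + vt H i (VChg sigma)).
  apply: (sum_lt (j0:=ord0)); first by move=> i; apply: pc_out.
  rewrite LH_0 card0_of //= => w; rewrite inE; exact: none.
rewrite Es Es' !big_split /=; lia.
Qed.

Lemma incident y z t : ed G y z t ->
  (exists i, isv H i /\ g i = y) \/ (exists j, isv H j /\ g j = z) ->
  exists i j, ed H i j t /\ g i = y /\ g j = z.
Proof.
move=> e; have ht := G_wfe e.
case: LH_nt => Hiv Hv Hvi.
case=> [[i [hi Ei]]|[j [hj Ej]]].
- subst y; have src : vt H i VCirc \/ vt H i (VChg t).
    by case: (G_src e) => h; [left|right]; apply: (E_vt' Hemb).
  have [w e'] : exists w, ed H i w t.
    case: (ltnP t sigma) => tl; first by apply: NL1 => //; lia.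
    have Et : t = sigma by lia.
    rewrite Et; rewrite Et in src.
    case: (eqVneq i ord0) => [->|ne]; first exact: C2.
    have := Hiv i.
    move=> /(_ _ ne) => h.
    have : 0 < #|outE H sigma i|.
      rewrite h //; by case: src => ->; rewrite ?orbT.
    by move/card_gt0P => [w]; rewrite inE; exists w.
  exists i, w; split => //; split => //.
  exact: G_out_uniq (E_ed Hemb e') e.
- subst z; have tgt : vt H j VStar \/ vt H j (VChg t).
    by case: (G_tgt e) => h; [left|right]; apply: (E_vt' Hemb).
  have [w e'] : exists w, ed H w j t.
    case: (ltnP t sigma) => tl.
    + case: tgt => h; first by apply: C1 => //; lia.
      have : 0 < #|inE_ H t j| by rewrite Hv //; lia.
      by move/card_gt0P => [w]; rewrite inE; exists w.
    + have E : t = sigma by lia.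
      rewrite E; apply: NL2; by rewrite -E.
  exists w, j; split => //; split => //.
  exact: G_in_uniq (E_ed Hemb e') e.
Qed.

Lemma no_loose_count : edge_count sigma G <= edge_count sigma H.
Proof.
apply: count_ge; apply: (closure_edges Hemb incident).
by exists VCirc; apply: LH_0.
Qed.

End NoLoose.

Lemma loose_exists : edge_count sigma H < edge_count sigma G ->
  exists v s, loose_end sigma H v s.
Proof.
move=> lt; apply: NNPP => Hno.
have Hnl : forall v s, ~ loose_end sigma H v s.
  by move=> v s hl; apply: Hno; exists v, s.
have := no_loose_count Hnl; lia.
Qed.

End Counting.

Definition RelH (H : tgraph 'I_n.+1) :=
  [rel x y | [exists s : 'I_sigma.+1, ed H x y s || ed H y x s]].

Lemma tconn_of_root (H : tgraph 'I_n.+1) :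
  (forall u, isv H u -> connect (RelH H) ord0 u) -> tconnected sigma H.
Proof.
move=> h u w hu hw.
have sym : symmetric (RelH H).
  move=> x y; apply/existsP/existsP => [[s hs]|[s hs]]; exists s; by rewrite orbC.
apply: connect_trans (h w hw); rewrite (sym_connect_sym sym); exact: h.
Qed.

Definition addG (H : tgraph 'I_n.+1) (w : 'I_n.+1) (y : T) (e : 'I_n.+1 * 'I_n.+1 * nat) :=
  TGraph (fun i a => vt H i a || ((i == w) && vt G y a))
         (fun i j t => ed H i j t || ((i, j, t) == e)).
Definition addg (g : 'I_n.+1 -> T) (w : 'I_n.+1) (y : T) :=
  fun i => if i == w then y else g i.

Section Extend.
Variable H : tgraph 'I_n.+1.
Variable g : 'I_n.+1 -> T.
Hypothesis Hemb : embed H g.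
Hypothesis Hinc : incomplete sigma H.
Hypothesis Hex : exists x y t, ed G x y t.
Variable N' : nat.
Hypothesis HN' : forall i : 'I_n.+1, isv H i <-> i <= N'.
Variables (v w : 'I_n.+1) (y : T) (e : 'I_n.+1 * 'I_n.+1 * nat).
Hypothesis Hv : isv H v.
Hypothesis Hwold : isv H w -> g w = y.
Hypothesis Hwnew : ~ isv H w -> (w = N'.+1 :> nat) /\ (forall i, isv H i -> g i <> y).
Hypothesis Hends : e = (v, w, e.2) \/ e = (w, v, e.2).
Hypothesis HeG : ed G (addg g w y e.1.1) (addg g w y e.1.2) e.2.
Hypothesis Hnotin : ~~ ed H e.1.1 e.1.2 e.2.
Hypothesis Hloc : ~ isv H w ->
  [/\ (vt G y (VChg sigma) || vt G y VCirc -> exists z, ed (addG H w y e) w z sigma),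
      (forall s, 0 < s < sigma -> vt G y (VChg s) -> exists z, ed (addG H w y e) z w s) &
      (vt G y VStar -> exists s, 0 < s < sigma /\ exists z, ed (addG H w y e) z w s)].

Local Notation H' := (addG H w y e).
Local Notation g' := (addg g w y).

Lemma A_isv i : isv H' i <-> isv H i \/ i = w.
Proof.
split.
- move=> [a /orP [h|/andP [/eqP -> _]]]; [left; by exists a|by right].
- case=> [[a h]|->]; first by exists a; rewrite /= h.
  case: (Hall y) => a h; exists a; by rewrite /= eqxx h orbT.
Qed.

Lemma A_g_old i : isv H i -> g' i = g i.
Proof. rewrite /addg; case: (eqVneq i w) => [->|//] /Hwold; by []. Qed.

Lemma A_vt_old i a : isv H i -> vt H' i a = vt H i a.
Proof.
move=> hi /=; case: (eqVneq i w) => [E|ne] /=; last by rewrite orbF.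
subst i; by rewrite (E_vteq Hemb _ hi) -(Hwold hi) orbb.
Qed.

Lemma A_vt_new a : ~ isv H w -> vt H' w a = vt G y a.
Proof.
move=> hw /=; rewrite eqxx /=.
case h: (vt H w a) => //=; exfalso; apply: hw; by exists a.
Qed.

Lemma A_g_w : g' w = y.
Proof. by rewrite /addg eqxx. Qed.

Lemma A_grow_vt i a : vt H i a -> vt H' i a.
Proof. by move=> /= ->. Qed.

Lemma A_grow_ed i j t : ed H i j t -> ed H' i j t.
Proof. by move=> /= ->. Qed.

Lemma A_e_isv : isv H' e.1.1 /\ isv H' e.1.2.
Proof.
have hv' : isv H' v by apply/A_isv; left.
have hw' : isv H' w by apply/A_isv; right.
by case: Hends => ->.
Qed.

Lemma A_emb : embed H' g'.
Proof.
split.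
- move=> i hi a; case: (classic (isv H i)) => hHi.
  + by rewrite A_vt_old // A_g_old // (E_vteq Hemb).
  + have Ei : i = w by case/A_isv: hi.
    subst i; by rewrite A_vt_new // A_g_w.
- move=> i j t /orP [ed1|/eqP Ee].
  + have [hi hj] := E_edv Hemb ed1.
    split; [by apply/A_isv; left|by apply/A_isv; left|].
    by rewrite !A_g_old //; apply: (E_ed Hemb).
  + have := A_e_isv; have := HeG; rewrite -Ee /= => hG [h1 h2]; by split.
- move=> i j hi hj.
  case: (classic (isv H i)) => hHi; case: (classic (isv H j)) => hHj.
  + rewrite !A_g_old //; exact: (E_inj Hemb).
  + have Ej : j = w by case/A_isv: hj.
    subst j; rewrite (A_g_old hHi) A_g_w => E; exfalso.
    exact: (proj2 (Hwnew hHj) i hHi E).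
  + have Ei : i = w by case/A_isv: hi.
    subst i; rewrite (A_g_old hHj) A_g_w => E; exfalso.
    exact: (proj2 (Hwnew hHi) j hHj (esym E)).
  + have Ei : i = w by case/A_isv: hi.
    have Ej : j = w by case/A_isv: hj.
    by rewrite Ei Ej.
- have h0 : isv H ord0 by apply/HN'.
  rewrite A_g_old //; by case: Hemb.
Qed.

Lemma A_count : edge_count sigma H' = (edge_count sigma H).+1.
Proof.
have ht : e.2 <= sigma.
  have := G_wfe HeG; lia.
rewrite /edge_count.
have -> : [set x : 'I_n.+1 * 'I_n.+1 * 'I_sigma.+1 | ed H' x.1.1 x.1.2 x.2] =
          (e.1.1, e.1.2, inord e.2) |: [set x : 'I_n.+1 * 'I_n.+1 * 'I_sigma.+1 | ed H x.1.1 x.1.2 x.2].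
  apply/setP => [[[i j] t]]; rewrite !inE /=.
  case: e ht Hnotin => [[a b] u] /= ht _.
  rewrite orbC; congr (_ || _).
  apply/eqP/eqP => [[-> -> E]|[-> -> ->]].
  - by rewrite -E inord_val.
  - by rewrite inordK //; lia.
rewrite cardsU1 inE /=.
by rewrite inordK ?(negbTE Hnotin) //; lia.
Qed.

Lemma A_inc : incomplete sigma H'.
Proof.
have Hemb' := A_emb.
case: (LH_nt Hemb Hinc) => Hiv Hv5 Hvi.
split; first exact: emb_wf Hemb'.
split.
  case: (classic (isv H w)) => hw.
  - exists N' => i; rewrite A_isv HN'; split; [case=> // ->; exact/HN'|by left].
  - exists N'.+1 => i; rewrite A_isv HN'.
    have := proj1 (Hwnew hw) => Ew.
    split; [case=> [|->]; lia|].
    move=> hi; case: (ltnP N' i) => hi'; [right; apply: ord_inj; lia|by left].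
split.
  apply: tconn_of_root => u /A_isv hu.
  have h0 : isv H ord0 by apply/HN'.
  have sub : forall x, isv H x -> connect (RelH H') ord0 x.
    move=> x hx.
    case: Hinc => _ [_ [Hc _]].
    apply: (connect_sub (e := RelH H)) (Hc _ _ h0 hx).
    move=> a b /existsP [s hs]; apply: connect1; apply/existsP; exists s.
    by case/orP: hs => h; rewrite /= h ?orbT.
  case: hu => [hu|->]; first exact: sub.
  apply: connect_trans (sub _ Hv) _; apply: connect1.
  have ht : e.2 <= sigma by have := G_wfe HeG; lia.
  apply/existsP; exists (inord e.2); rewrite /= inordK; last by rewrite ltnS.
  by case: Hends => Ee; rewrite -Ee eqxx ?orbT.
split; first exact: A_grow_vt (LH_0 Hinc).
have [Hc [Hs Hch]] := E_local Hemb'.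
split; first by move=> u /Hc.
split; first by move=> u /Hs.
split; first by move=> u s /Hch.
right; split.
- move=> u hu ne; apply/eqP; rewrite eqn_leq (E_out_le1 Hemb') /=.
  have hu' : isv H' u by case/orP: hu => h; [exists (VChg sigma)|exists VCirc].
  case: (classic (isv H u)) => hHu.
  + rewrite !A_vt_old // in hu.
    apply: leq_trans (_ : #|outE H sigma u| <= _); first by rewrite Hiv.
    apply: subset_leq_card; apply/subsetP => z; rewrite !inE; exact: A_grow_ed.
  + have Eu : u = w by case/A_isv: hu'.
    subst u; rewrite !A_vt_new // in hu.
    case: (Hloc hHu) => [/(_ hu) [z ez] _ _].
    by apply/card_gt0P; exists z; rewrite inE.
- move=> u s hs hu; apply/eqP; rewrite eqn_leq (E_in_le1 Hemb') /=.
  have hu' : isv H' u by exists (VChg s).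
  case: (classic (isv H u)) => hHu.
  + rewrite !A_vt_old // in hu.
    apply: leq_trans (_ : #|inE_ H s u| <= _); first by rewrite Hv5.
    apply: subset_leq_card; apply/subsetP => z; rewrite !inE; exact: A_grow_ed.
  + have Eu : u = w by case/A_isv: hu'.
    subst u; rewrite !A_vt_new // in hu.
    case: (Hloc hHu) => [_ /(_ s hs hu) [z ez] _].
    by apply/card_gt0P; exists z; rewrite inE.
- move=> u hu.
  have hu' : isv H' u by exists VStar.
  case: (classic (isv H u)) => hHu.
  + rewrite !A_vt_old // in hu.
    case: (Hvi u hu) => s [hs [z ez]]; exists s; split => //; exists z.
    exact: A_grow_ed.
  + have Eu : u = w by case/A_isv: hu'.
    subst u; rewrite !A_vt_new // in hu.
    by case: (Hloc hHu) => [_ _ /(_ hu)].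
Qed.

End Extend.
Lemma ex_min_P (P : nat -> Prop) : (exists k, P k) -> exists k, P k /\ forall k', P k' -> k <= k'.
Proof.
move=> [k Pk].
suff : forall m k, k <= m -> P k -> exists k0, P k0 /\ forall k', P k' -> k0 <= k'.
  by move=> /(_ k k (leqnn k) Pk).
elim=> [|m IH] k0 hk Pk0.
- exists k0; split => // k' _; lia.
- case: (classic (exists k', P k' /\ k' < k0)) => [[k' [Pk' lt]]|no].
  + apply: (IH k') => //; lia.
  + exists k0; split => // k' Pk'; case: (leqP k0 k') => // lt.
    by exfalso; apply: no; exists k'.
Qed.

Lemma most_urgent_exists (H : tgraph 'I_n.+1) :
  (exists v s, loose_end sigma H v s) -> exists v s, most_urgent sigma H v s.
Proof.
move=> [v0 [s0 h0]].
have := @ex_min_P (fun k => exists v s, loose_end sigma H v s /\ k = s * n.+1 + v).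
case; first by exists (s0 * n.+1 + v0), v0, s0.
move=> k [[v [s [hl ->]]] hmin].
exists v, s; split => // v' s' hl'.
have := hmin (s' * n.+1 + v') (ex_intro _ v' (ex_intro _ s' (conj hl' erefl))).
have hv := ltn_ord v; have hv' := ltn_ord v'.
case: (ltngtP s s') => [lt|gt|eq] le; [by left| |by right; split => //; subst; lia].
exfalso.
have : s' * n.+1 + n.+1 <= s * n.+1 by rewrite addnC -mulSn leq_mul2r gt orbT.
lia.
Qed.

Lemma cardT : #|T| = n.+1.
Proof. by rewrite prednK //; apply/card_gt0P; exists vo. Qed.

Lemma choose_w (H : tgraph 'I_n.+1) g (Hemb : embed H g) N'
  (HN' : forall i : 'I_n.+1, isv H i <-> i <= N') y :
  exists w : 'I_n.+1, (isv H w -> g w = y) /\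
     (~ isv H w -> (w = N'.+1 :> nat) /\ forall i, isv H i -> g i <> y).
Proof.
case: (boolP [exists i : 'I_n.+1, (i <= N') && (g i == y)]).
- move/existsP => [i /andP [hi /eqP gy]]; exists i; split => // hn.
  by exfalso; apply: hn; apply/HN'.
- move/existsPn => none.
  have notin : forall i, isv H i -> g i <> y.
    by move=> i /HN' hi E; move: (none i); rewrite hi E eqxx.
  have lt : N'.+1 < n.+1.
    case: (ltnP N' n) => // le; exfalso.
    have inj : {in [set: 'I_n.+1] &, injective g}.
      move=> i j _ _; apply: (E_inj Hemb); apply/HN'; have := ltn_ord i; have := ltn_ord j; lia.
    have E : #|g @: [set: 'I_n.+1]| = #|T| by rewrite card_in_imset // cardsT card_ord cardT.
    have : g @: [set: 'I_n.+1] = [set: T] by apply/eqP; rewrite eqEcard subsetT /= cardsT E.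
    move=> EI; have : y \in g @: [set: 'I_n.+1] by rewrite EI inE.
    move=> /imsetP [i _ Ey]; apply: (notin i) => //; apply/HN'.
    have := ltn_ord i; lia.
  exists (Ordinal lt); split.
  + by move/HN' => /=; lia.
  + by move=> _; split.
Qed.

Lemma step (H : tgraph 'I_n.+1) g :
  embed H g -> incomplete sigma H -> edge_count sigma H < edge_count sigma G ->
  exists H' g', [/\ embed H' g', incomplete sigma H',
     edge_count sigma H' = (edge_count sigma H).+1 & ext_most_urgent sigma H H'].
Proof.
move=> Hemb Hinc hlt.
have Hex : exists x y t, ed G x y t.
  have : 0 < edge_count sigma G by lia.
  move/card_gt0P => [[[x y] t]]; rewrite inE /= => e; by exists x, y, t.
have [N' HN'] : exists N', forall i : 'I_n.+1, isv H i <-> i <= N'.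
  by case: Hinc => _ [].
have [v [s [hl hmin]]] := most_urgent_exists (loose_exists Hemb Hinc Hex hlt).
case: (ltnP s sigma) => hs.
-
  have [hvt [hs' hno]] : (vt H v VCirc \/ vt H v (VChg s)) /\ 0 < s < sigma /\ (forall w, ~~ ed H v w s).
    by case: hl => [//|[_ [Es _]]]; exfalso; lia.
  have hv : isv H v by case: hvt => h; [exists VCirc|exists (VChg s)].
  have [y ey] : exists y, ed G (g v) y s.
    case: hvt => h; have := E_vt Hemb h.
    + move=> hc; apply: (G_out_ex Hex hc); lia.
    + exact: ex_out_of_chg.
  have [w [Hwold Hwnew]] := choose_w Hemb HN' y.
  set e := (v, w, s).
  have gv : addg g w y v = g v.
    rewrite /addg; case: (eqVneq v w) => [E|//]; subst v; by rewrite (Hwold hv).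
  have gw : addg g w y w = y by rewrite /addg eqxx.
  have Hends : e = (v, w, e.2) \/ e = (w, v, e.2) by left.
  have HeG : ed G (addg g w y e.1.1) (addg g w y e.1.2) e.2 by rewrite /= gv gw.
  have Hnotin : ~~ ed H e.1.1 e.1.2 e.2 by apply: hno.
  have Hloc : ~ isv H w ->
    [/\ (vt G y (VChg sigma) || vt G y VCirc -> exists z, ed (addG H w y e) w z sigma),
        (forall s, 0 < s < sigma -> vt G y (VChg s) -> exists z, ed (addG H w y e) z w s) &
        (vt G y VStar -> exists s, 0 < s < sigma /\ exists z, ed (addG H w y e) z w s)].
    move=> _.
    have ht := G_tgt ey.
    have newe : ed (addG H w y e) v w s by rewrite /= eqxx orbT.
    split.
    + move=> /orP [h|h]; exfalso; case: ht => h'.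
      * by have := G_types_uniq Hex h h'.
      * have := G_types_uniq Hex h h'; case; lia.
      * by have := G_types_uniq Hex h h'.
      * by have := G_types_uniq Hex h h'.
    + move=> s' hs'' h; case: ht => h'.
      * by have := G_types_uniq Hex h h'.
      * have := G_types_uniq Hex h h'; case=> ->; by exists v.
    + move=> h; exists s; split => //; by exists v.
  have Hemb' := A_emb Hemb HN' hv Hwold Hwnew Hends HeG.
  have Hinc' := A_inc Hemb Hinc HN' hv Hwold Hwnew Hends HeG Hnotin Hloc.
  exists (addG H w y e), (addg g w y); split => //.
  + exact: A_count Hwnew HeG Hnotin.
  + exists v, s; split; first by split.
    split => //; split; first by move=> u a; apply: A_grow_vt.
    exists w; rewrite hs /=; split => //.
-
  have [hvt [Es hno]] : (vt H v VStar \/ vt H v (VChg sigma)) /\ s = sigma /\ (forall w, ~~ ed H w v sigma).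
    by case: hl => [[_ [hs' _]]|//]; exfalso; lia.
  subst s.
  have hv : isv H v by case: hvt => h; [exists VStar|exists (VChg sigma)].
  have [y ey] : exists y, ed G y (g v) sigma.
    case: hvt => h; have := E_vt Hemb h.
    + move=> hc; apply: (G_in_ex Hex hc); lia.
    + exact: ex_in_of_chg.
  have [w [Hwold Hwnew]] := choose_w Hemb HN' y.
  set e := (w, v, sigma).
  have gv : addg g w y v = g v.
    rewrite /addg; case: (eqVneq v w) => [E|//]; subst v; by rewrite (Hwold hv).
  have gw : addg g w y w = y by rewrite /addg eqxx.
  have Hends : e = (v, w, e.2) \/ e = (w, v, e.2) by right.
  have HeG : ed G (addg g w y e.1.1) (addg g w y e.1.2) e.2 by rewrite /= gv gw.
  have Hnotin : ~~ ed H e.1.1 e.1.2 e.2 by apply: hno.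
  have Hloc : ~ isv H w ->
    [/\ (vt G y (VChg sigma) || vt G y VCirc -> exists z, ed (addG H w y e) w z sigma),
        (forall s, 0 < s < sigma -> vt G y (VChg s) -> exists z, ed (addG H w y e) z w s) &
        (vt G y VStar -> exists s, 0 < s < sigma /\ exists z, ed (addG H w y e) z w s)].
    move=> _.
    have ht := G_src ey.
    have newe : ed (addG H w y e) w v sigma by rewrite /= eqxx orbT.
    split.
    + by move=> _; exists v.
    + move=> s' hs'' h; exfalso; case: ht => h'.
      * by have := G_types_uniq Hex h h'.
      * have := G_types_uniq Hex h h'; case; lia.
    + move=> h; exfalso; case: ht => h'.
      * by have := G_types_uniq Hex h h'.
      * by have := G_types_uniq Hex h h'.
  have Hemb' := A_emb Hemb HN' hv Hwold Hwnew Hends HeG.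
  have Hinc' := A_inc Hemb Hinc HN' hv Hwold Hwnew Hends HeG Hnotin Hloc.
  exists (addG H w y e), (addg g w y); split => //.
  + exact: A_count Hwnew HeG Hnotin.
  + exists v, sigma; split; first by split.
    split => //; split; first by move=> u a; apply: A_grow_vt.
    exists w; rewrite ltnn /=; split => //.
Qed.

Definition isCirc (a : vtype) := if a is VCirc then true else false.

Definition H0 : tgraph 'I_n.+1 :=
  TGraph (fun i a => (i == ord0) && isCirc a) (fun _ _ _ => false).

Lemma H0_isv i : isv H0 i <-> i = ord0.
Proof.
split; first by move=> [a /andP [/eqP -> _]].
by move=> ->; exists VCirc.
Qed.

Lemma H0_emb : embed H0 (fun _ => vo).
Proof.
split => //.
- move=> i /H0_isv -> a /=; case: a => [||k]; rewrite /= ?Hvo //.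
  + by apply/esym/negP => /vo_type.
  + by apply/esym/negP => /vo_type.
- by move=> i j /H0_isv -> /H0_isv ->.
Qed.

Lemma H0_inc : incomplete sigma H0.
Proof.
split; first exact: emb_wf H0_emb.
split; first by exists 0 => i; rewrite H0_isv; split => [->//|]; rewrite leqn0 => /eqP h; apply: ord_inj; rewrite h.
split.
  apply: tconn_of_root => u /H0_isv ->; exact: connect0.
split => //.
have [Hc [Hs Hch]] := E_local H0_emb.
split; first by move=> u /Hc.
split; first by move=> u /Hs.
split; first by move=> u s /Hch.
right; split.
- by move=> u /orP [/andP [_ //]|/andP [/eqP -> _]]; rewrite eqxx.
- by move=> u s _ /andP [_ //].
- by move=> u /andP [_ //].
Qed.

Lemma H0_count : edge_count sigma H0 = 0.
Proof. by apply: card0_of => x; rewrite inE. Qed.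

Lemma H0_triv : trivial_incomplete H0.
Proof.
split => //= i a; split.
- by move=> /andP [/eqP -> ]; case: a.
- by move=> [-> ->]; rewrite eqxx.
Qed.

Lemma iterate m : m <= edge_count sigma G ->
  exists (Gs : nat -> tgraph 'I_n.+1) g,
    [/\ embed (Gs m) g, edge_count sigma (Gs m) = m,
        (forall k, k <= m -> incomplete sigma (Gs k)),
        trivial_incomplete (Gs 0) &
        (forall k, 0 < k <= m -> ext_most_urgent sigma (Gs k.-1) (Gs k))].
Proof.
elim: m => [_|m IH hm].
- exists (fun _ => H0), (fun _ => vo); split => //.
  + exact: H0_emb.
  + exact: H0_count.
  + move=> k _; exact: H0_inc.
  + exact: H0_triv.
  + by move=> k; lia.
- have [Gs [g [Hemb Hcnt Hinc Htriv Hsteps]]] := IH (ltnW hm).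
  have [H' [g' [Hemb' Hinc' Hcnt' Hext]]] : exists H' g', _ := step Hemb (Hinc m (leqnn m)) (ltac:(by rewrite Hcnt)).
  exists (fun k => if k <= m then Gs k else H'), g'; split.
  + by rewrite ltnn.
  + by rewrite ltnn Hcnt' Hcnt.
  + move=> k hk; case: ifP => hkm; [exact: Hinc|exact: Hinc'].
  + by [].
  + move=> k /andP [k0 hk]; case: (leqP k m) => hkm.
    * rewrite (_ : k.-1 <= m); last by lia.
      by apply: Hsteps; lia.
    * have Ek : k = m.+1 by lia.
      by subst k; rewrite /= leqnn.
Qed.

Lemma existence : exists eta : T -> 'I_n.+1,
    bijective eta /\
     exists Gs : nat -> tgraph 'I_n.+1,
       [/\ eta vo = ord0,
           (forall e, (e <= edge_count sigma G)%N -> incomplete sigma (Gs e)),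
           trivial_incomplete (Gs 0) /\ tg_eq (relabel eta (Gs (edge_count sigma G))) G &
           (forall e, (0 < e <= edge_count sigma G)%N -> ext_most_urgent sigma (Gs e.-1) (Gs e))].
Proof.
set M := edge_count sigma G.
have [Gs [g [Hemb Hcnt Hinc Htriv Hsteps]]] := iterate (leqnn M).
set H := Gs M.
have surjE := count_eq_surj Hemb Hcnt.
have h0 : isv H ord0 by exists VCirc; exact: LH_0 (Hinc M (leqnn M)).
have surj := closure_all Hemb (fun y z t e _ => surjE y z t e) h0.
have [N' HN'] : exists N', forall i : 'I_n.+1, isv H i <-> i <= N'.
  by case: (Hinc M (leqnn M)) => _ [].
have allv : forall i, isv H i.
  move=> i; apply/HN'.
  case: (leqP n N') => le; first by have := ltn_ord i; lia.
  exfalso.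
  have : [set: T] \subset g @: [set i : 'I_n.+1 | i <= N'].
    apply/subsetP => x _; have [j [hj <-]] := surj x.
    by apply: imset_f; rewrite inE; apply/HN'.
  move/subset_leq_card; rewrite cardsT.
  move/(leq_trans)/(_ (leq_imset_card _ _)) => h1.
  have : #|[set i : 'I_n.+1 | i <= N']| < n.+1.
    rewrite -[X in _ < X]card_ord; apply: proper_card; apply/properP; split.
      by apply/subsetP.
    by exists ord_max; rewrite // inE /= -ltnNge.
  move=> h2; have hT := cardT; lia.
have ginj : injective g by move=> i j; apply: (E_inj Hemb).
pose eta := fun x => odflt ord0 [pick i | g i == x].
have etaK : cancel eta g.
  move=> x; rewrite /eta; case: pickP => [i /eqP //|none].
  by have [j [_ Ej]] := surj x; move: (none j); rewrite Ej eqxx.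
have getaK : cancel g eta by move=> i; apply: ginj; rewrite etaK.
exists eta; split; first by exists g.
exists Gs; split => //.
- by case: Hemb => _ _ _ <-; rewrite getaK.
- split => //; split.
  + move=> x a /=; by rewrite (E_vteq Hemb _ (allv _)) etaK.
  + move=> x y t /=; apply/idP/idP.
    * by move/(E_ed Hemb); rewrite !etaK.
    * move=> e; have [i [j [e' [<- <-]]]] := surjE _ _ _ e.
      by rewrite !getaK.
Qed.

Lemma tg_eq_eq (U : Type) (H1 H2 : tgraph U) : tg_eq H1 H2 -> H1 = H2.
Proof.
case: H1 H2 => [vt1 ed1] [vt2 ed2] [/= E1 E2]; f_equal.
- apply: functional_extensionality => i; apply: functional_extensionality => a; exact: E1.
- do 3 (apply: functional_extensionality => ?); exact: E2.
Qed.

Definition Mc := edge_count sigma G.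

Definition run (eta : T -> 'I_n.+1) (Gs : nat -> tgraph 'I_n.+1) :=
  [/\ eta vo = ord0,
      (forall e, (e <= Mc)%N -> incomplete sigma (Gs e)),
      trivial_incomplete (Gs 0) /\ tg_eq (relabel eta (Gs Mc)) G &
      (forall e, (0 < e <= Mc)%N -> ext_most_urgent sigma (Gs e.-1) (Gs e))].

Section Run.
Variables (eta : T -> 'I_n.+1) (g : 'I_n.+1 -> T) (Gs : nat -> tgraph 'I_n.+1).
Hypothesis etaK : cancel eta g.
Hypothesis getaK : cancel g eta.
Hypothesis Hrun : run eta Gs.

Lemma run_inc e : e <= Mc -> incomplete sigma (Gs e).
Proof. by case: Hrun => _ h _ _; apply: h. Qed.

Lemma run_ext e : 0 < e <= Mc -> ext_most_urgent sigma (Gs e.-1) (Gs e).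
Proof. by case: Hrun => _ _ _ h; apply: h. Qed.

Lemma run_final_vt i a : vt (Gs Mc) i a = vt G (g i) a.
Proof. case: Hrun => _ _ [_ [E1 _]] _; by rewrite -E1 /= getaK. Qed.

Lemma run_final_ed i j t : ed (Gs Mc) i j t = ed G (g i) (g j) t.
Proof. case: Hrun => _ _ [_ [_ E2]] _; by rewrite -E2 /= !getaK. Qed.

Lemma run_grow e : e <= Mc ->
  (forall i a, vt (Gs e) i a -> vt (Gs Mc) i a) /\
  (forall i j t, ed (Gs e) i j t -> ed (Gs Mc) i j t).
Proof.
move=> he; have [d Ed] : exists d, Mc = e + d by exists (Mc - e); lia.
elim: d e he Ed => [|d IH] e he Ed; first by rewrite Ed addn0.
have [IH1 IH2] := IH e.+1 (ltac:(lia)) (ltac:(lia)).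
have := run_ext (e := e.+1) (ltac:(lia)) => /= [[v [s [_ [_ [Hg [w [_ Hed]]]]]]]].
split.
- move=> i a h; apply: IH1; exact: Hg.
- move=> i j t h; apply: IH2; by rewrite Hed h.
Qed.

Section RunNT.
Hypothesis Hex : exists x y t, ed G x y t.

Lemma run_embed e : e <= Mc -> embed (Gs e) g.
Proof.
move=> he; have [G1 G2] := run_grow he.
have Hinc := run_inc he.
split.
- move=> i [b hb] a.
  have hb' : vt G (g i) b by rewrite -run_final_vt; apply: G1.
  apply/idP/idP => h.
  + by rewrite -run_final_vt; apply: G1.
  + by rewrite (G_types_uniq Hex h hb').
- move=> i j t h; case: Hinc => [[_ Hwf] _].
  have [hi hj _] := Hwf _ _ _ h; split => //.
  by rewrite -run_final_ed; apply: G2.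
- move=> i j _ _ E; by rewrite -(getaK i) -(getaK j) E.
- by case: Hrun => E _ _ _; rewrite -E etaK.
Qed.

End RunNT.
End Run.

Lemma ext_V (H H' : tgraph 'I_n.+1) v w (e0 : 'I_n.+1 * 'I_n.+1 * nat) :
  incomplete sigma H -> incomplete sigma H' ->
  (forall u a, vt H u a -> vt H' u a) -> isv H v ->
  (e0 = (v, w, e0.2) \/ e0 = (w, v, e0.2)) ->
  (forall x y t, ed H' x y t = ed H x y t || ((x, y, t) == e0)) ->
  forall i, isv H' i <-> isv H i \/ i = w.
Proof.
move=> Hinc Hinc' Hg hv Hends Hed i.
have [[_ Hwf] _] := Hinc; have [[_ Hwf'] _] := Hinc'.
have he : ed H' e0.1.1 e0.1.2 e0.2 by rewrite Hed -surjective_pairing -surjective_pairing eqxx orbT.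
split; last first.
  case=> [[a h]|->]; first by exists a; apply: Hg.
  have [h1 h2 _] := Hwf' _ _ _ he.
  by case: Hends => E; rewrite E /= in h1 h2.
move=> hi; case: (classic (isv H i)) => hHi; first by left.
case: (classic (i = w)) => hw; first by right.
exfalso.
have h0 : isv H ord0 by exists VCirc; case: Hinc => _ [_ [_ [h _]]].
have h0' : isv H' ord0 by case: h0 => a h; exists a; apply: Hg.
have iso : forall z, ~~ RelH H' i z.
  move=> z; apply/negP => /existsP [s]; rewrite !Hed => /orP [/orP [h|/eqP Ee]|/orP [h|/eqP Ee]].
  - by have [] := Hwf _ _ _ h.
  - by case: Hends => E; rewrite E in Ee; case: Ee => *; subst.
  - by have [] := Hwf _ _ _ h.
  - by case: Hends => E; rewrite E in Ee; case: Ee => *; subst.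
have := connect_isolated iso (proj1 (proj2 (proj2 Hinc')) _ _ hi h0').
move=> E; apply: hHi; by rewrite -E.
Qed.

Section Unique.
Variables (eta1 : T -> 'I_n.+1) (g1 : 'I_n.+1 -> T) (Gs1 : nat -> tgraph 'I_n.+1).
Variables (eta2 : T -> 'I_n.+1) (g2 : 'I_n.+1 -> T) (Gs2 : nat -> tgraph 'I_n.+1).
Hypothesis etaK1 : cancel eta1 g1.
Hypothesis getaK1 : cancel g1 eta1.
Hypothesis Hrun1 : run eta1 Gs1.
Hypothesis etaK2 : cancel eta2 g2.
Hypothesis getaK2 : cancel g2 eta2.
Hypothesis Hrun2 : run eta2 Gs2.

Lemma uniq_step e : e < Mc -> Gs1 e = Gs2 e -> (forall i, isv (Gs1 e) i -> g1 i = g2 i) ->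
  Gs1 e.+1 = Gs2 e.+1 /\ (forall i, isv (Gs1 e.+1) i -> g1 i = g2 i).
Proof.
move=> he E Hag.
have Hex : exists x y t, ed G x y t.
  have : 0 < edge_count sigma G by rewrite -/Mc; lia.
  move/card_gt0P => [[[x y] t]]; rewrite inE /= => ed0; by exists x, y, t.
have he1 : 0 < e.+1 <= Mc by lia.
have [v1 [s1 [mu1 ext1]]] := run_ext Hrun1 he1.
have [v2 [s2 [mu2 ext2]]] := run_ext Hrun2 he1.
rewrite /= -E in mu2 ext2; rewrite /= in mu1 ext1.
set H := Gs1 e in mu1 mu2 ext1 ext2 Hag E.
have [Ev Es] : v1 = v2 /\ s1 = s2.
  have h1 := proj2 mu1 _ _ (proj1 mu2); have h2 := proj2 mu2 _ _ (proj1 mu1).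
  have Es : s1 = s2 by lia.
  split => //; case: h1 => [?|[_ le1]]; first lia; case: h2 => [?|[_ le2]]; first lia.
  by apply: val_inj; apply/eqP; rewrite /= eqn_leq le1 le2.
subst v2 s2.
move: v1 s1 mu1 mu2 ext1 ext2 => v s mu1 _ ext1 ext2.
have HincH : incomplete sigma H by apply: (run_inc Hrun1); lia.
have hv : isv H v.
  case: (proj1 mu1) => [[[h|h] _]|[[h|h] _]]; by eexists; exact: h.
case: ext1 => inc1 [gr1 [w1 /= [nin1 ed1]]].
case: ext2 => inc2 [gr2 [w2 /= [nin2 ed2]]].
set e1 := (if s < sigma then (v, w1, s) else (w1, v, sigma)) in nin1 ed1.
set e2 := (if s < sigma then (v, w2, s) else (w2, v, sigma)) in nin2 ed2.
have ends1 : e1 = (v, w1, e1.2) \/ e1 = (w1, v, e1.2) by rewrite /e1; case: ifP; [left|right].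
have ends2 : e2 = (v, w2, e2.2) \/ e2 = (w2, v, e2.2) by rewrite /e2; case: ifP; [left|right].
have V1 := ext_V HincH inc1 gr1 hv ends1 ed1.
have V2 := ext_V HincH inc2 gr2 hv ends2 ed2.
have hM : e.+1 <= Mc by lia.
have [_ GE1] := run_grow Hrun1 hM.
have [_ GE2] := run_grow Hrun2 hM.
have ge1 : ed G (g1 e1.1.1) (g1 e1.1.2) e1.2.
  rewrite -(run_final_ed getaK1 Hrun1); apply: GE1.
  by rewrite ed1 -!surjective_pairing eqxx orbT.
have ge2 : ed G (g2 e2.1.1) (g2 e2.1.2) e2.2.
  rewrite -(run_final_ed getaK2 Hrun2); apply: GE2.
  by rewrite ed2 -!surjective_pairing eqxx orbT.
have gv := Hag v hv.
have gw : g1 w1 = g2 w2.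
  move: ge1 ge2; rewrite /e1 /e2; case: ifP => _ /= ge1 ge2.
  - apply: G_out_uniq ge1 _; by rewrite gv.
  - apply: G_in_uniq ge1 _; by rewrite gv.
have inj1 : injective g1 := can_inj getaK1.
have inj2 : injective g2 := can_inj getaK2.
have Ew : w1 = w2.
  case: (classic (isv H w1)) => h1.
    by apply: inj2; rewrite -(Hag _ h1).
  case: (classic (isv H w2)) => h2.
    by apply: inj1; rewrite (Hag _ h2).
  have [N HN] : exists N, forall i : 'I_n.+1, isv H i <-> i <= N by case: HincH => _ [].
  have [N1 HN1] : exists N, forall i : 'I_n.+1, isv (Gs1 e.+1) i <-> i <= N by case: inc1 => _ [].
  have [N2 HN2] : exists N, forall i : 'I_n.+1, isv (Gs2 e.+1) i <-> i <= N by case: inc2 => _ [].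
  have hw1 : isv (Gs1 e.+1) w1 by apply/V1; right.
  have hw2 : isv (Gs2 e.+1) w2 by apply/V2; right.
  have n1 : N < w1 by rewrite ltnNge; apply/negP => /HN.
  have n2 : N < w2 by rewrite ltnNge; apply/negP => /HN.
  have lt : N.+1 < n.+1 by exact: leq_ltn_trans n1 (ltn_ord w1).
  have u1 : isv (Gs1 e.+1) (Ordinal lt).
    apply/HN1 => /=; move/HN1: hw1 => h; exact: leq_trans n1 h.
  have u2 : isv (Gs2 e.+1) (Ordinal lt).
    apply/HN2 => /=; move/HN2: hw2 => h; exact: leq_trans n2 h.
  have nu : ~ isv H (Ordinal lt) by move/HN => /=; rewrite ltnn.
  case/V1: u1 => [//|<-]; by case/V2: u2 => [//|<-].
subst w2.
have He : e1 = e2 by [].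
have Hag' : forall i, isv (Gs1 e.+1) i -> g1 i = g2 i.
  move=> i /V1 [hi|->]; [exact: Hag|exact: gw].
split => //.
apply: tg_eq_eq; split.
- move=> i a; case: (classic (isv (Gs1 e.+1) i)) => hi.
  + have hi2 : isv (Gs2 e.+1) i by apply/V2; apply/V1.
    rewrite (E_vteq (run_embed etaK1 getaK1 Hrun1 Hex hM) _ hi).
    rewrite (E_vteq (run_embed etaK2 getaK2 Hrun2 Hex hM) _ hi2).
    by rewrite Hag'.
  + have hi2 : ~ isv (Gs2 e.+1) i by move/V2/V1.
    apply/idP/idP => h; exfalso; [apply: hi|apply: hi2]; by exists a.
- by move=> x y t; rewrite ed1 ed2 He.
Qed.

Lemma uniq_all e : e <= Mc -> Gs1 e = Gs2 e /\ (forall i, isv (Gs1 e) i -> g1 i = g2 i).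
Proof.
elim: e => [_|e IH he].
- case: Hrun1 => E1 _ [[T1a T1b] _] _; case: Hrun2 => E2 _ [[T2a T2b] _] _.
  split.
  + apply: tg_eq_eq; split.
    * move=> i a; apply/idP/idP => h; [apply/T2a; apply/T1a|apply/T1a; apply/T2a] => //.
    * move=> i j t; by rewrite (negbTE (T1b i j t)) (negbTE (T2b i j t)).
  + move=> i [a /T1a [-> _]].
    by rewrite -{1}E1 etaK1 -E2 etaK2.
- have [IH1 IH2] := IH (ltnW he).
  exact: uniq_step.
Qed.

Lemma uniqueness v : eta2 v = eta1 v.
Proof.
have [_ Hag] := uniq_all (leqnn Mc).
have hi : isv (Gs1 Mc) (eta1 v).
  case: (Hall (g1 (eta1 v))) => a h; exists a; by rewrite (run_final_vt getaK1 Hrun1).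
have := Hag _ hi; rewrite etaK1 => E.
by rewrite {1}E getaK2.
Qed.

End Unique.

End Toom.

Theorem mainTheorem8 (sigma : nat) (T : finType) (G : tgraph T) (vo : T) :
  (2 <= sigma)%N ->
  (forall v : T, isv G v) ->
  toom sigma G -> vt G vo VCirc -> tconnected sigma G ->
  ~ (exists v0 : T, trivial_at G v0) ->
  let N := #|T|.-1 in
  let M := edge_count sigma G in
  exists eta : T -> 'I_N.+1,
    (bijective eta /\
     exists Gs : nat -> tgraph 'I_N.+1,
       [/\ eta vo = ord0,
           (forall e, (e <= M)%N -> incomplete sigma (Gs e)),
           trivial_incomplete (Gs 0) /\ tg_eq (relabel eta (Gs M)) G &
           (forall e, (0 < e <= M)%N -> ext_most_urgent sigma (Gs e.-1) (Gs e))]) /\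
    (forall eta' : T -> 'I_N.+1,
       (bijective eta' /\
        exists Gs : nat -> tgraph 'I_N.+1,
          [/\ eta' vo = ord0,
              (forall e, (e <= M)%N -> incomplete sigma (Gs e)),
              trivial_incomplete (Gs 0) /\ tg_eq (relabel eta' (Gs M)) G &
              (forall e, (0 < e <= M)%N -> ext_most_urgent sigma (Gs e.-1) (Gs e))]) ->
       forall v, eta' v = eta v).
Proof.
move=> Hsig Hall Htoom Hvo Hcon Hnt N M.
have [eta [beta [Gs HGs]]] := existence Hsig Hall Htoom Hvo Hcon Hnt.
exists eta; split; first by split => //; exists Gs.
move=> eta' [beta' [Gs' HGs']] v.
case: beta => g etaK getaK; case: beta' => g' etaK' getaK'.
exact: (uniqueness Hsig Hall Htoom Hvo Hcon etaK getaK HGs etaK' getaK' HGs').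
Qed.
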